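(* Let $V$ be a commutative unital quantale whose underlying lattice is a frame and in which $k=\top$. Let $(X,a)$ and $(Y,b)$ be $V$-groups, $\varphi\colon Y\to\mathrm{Aut}(X)$ a group action, and $X\rtimes Y$ the semidirect product group defined by $\varphi$. The following are equivalent: (i) $(X,a)\xrightarrow{\langle 1,0\rangle}(X\rtimes Y,a\otimes b)\underset{\langle 0,1\rangle}{\overset{\pi_2}{\rightleftarrows}}(Y,b)$ is a split extension in $\mathsf{VGrp}$, where $(a\otimes b)((x,y),(x',y'))=a(x,x')\otimes b(y,y')$; (ii) the map $\overline{\varphi}\colon(X\times Y,a\otimes b)\to(X\times Y,a\otimes b)$, $(x,y)\mapsto(\varphi_y(x),y)$, is a $V$-functor.
   Context: A commutative unital quantale $V$ is a complete lattice with a commutative associative operation $\otimes$ with unit $k$ preserving arbitrary joins in each variable. A $V$-category $(X,a)$: $a\colon X\times X\to V$ with $k\le a(x,x)$ and $a(x,x')\otimes a(x',x'')\le a(x,x'')$; a $V$-functor is a map $f$ with $a(x,x')\le b(f(x),f(x'))$. A $V$-group $(X,a,+)$ is a $V$-category with a group structure (additive, not necessarily abelian) such that $a(x_1,x_2)\otimes a(x_1',x_2')\le a(x_1+x_1',x_2+x_2')$; $V$-homomorphisms are group homomorphisms that are $V$-functors; category $\mathsf{VGrp}$ (pointed since $k=\top$). The semidirect product $X\rtimes Y$ is $X\times Y$ with $(x,y)+(x',y')=(x+\varphi_y(x'),y+y')$, $\varphi_y=\varphi(y)$; $\langle 1,0\rangle(x)=(x,0)$, $\langle 0,1\rangle(y)=(0,y)$,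 $\pi_2(x,y)=y$. A split extension in $\mathsf{VGrp}$ means: the structure on the middle object makes it a $V$-group, all three maps are $V$-homomorphisms, $\pi_2\circ\langle 0,1\rangle=1_Y$, and $\langle 1,0\rangle$ is a kernel of $\pi_2$ in $\mathsf{VGrp}$. *)

(* Defs.v *)
Set Implicit Arguments.
Unset Strict Implicit.

Record Quantale := {
  qcar :> Type;
  qle : qcar -> qcar -> Prop;
  qle_refl : forall x, qle x x;
  qle_trans : forall x y z, qle x y -> qle y z -> qle x z;
  qle_antisym : forall x y, qle x y -> qle y x -> x = y;
  qsup : (qcar -> Prop) -> qcar;
  qsup_ub : forall (S : qcar -> Prop) x, S x -> qle x (qsup S);
  qsup_least : forall (S : qcar -> Prop) u, (forall x, S x -> qle x u) -> qle (qsup S) u;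
  qten : qcar -> qcar -> qcar;
  qk : qcar;
  qten_comm : forall x y, qten x y = qten y x;
  qten_assoc : forall x y z, qten x (qten y z) = qten (qten x y) z;
  qten_unit : forall x, qten qk x = x;
  qten_supr : forall x (S : qcar -> Prop),
      qten x (qsup S) = qsup (fun z => exists s, S s /\ z = qten x s);
  qten_supl : forall x (S : qcar -> Prop),
      qten (qsup S) x = qsup (fun z => exists s, S s /\ z = qten s x)
}.

Arguments qle {q}.
Arguments qsup {q}.
Arguments qten {q}.
Arguments qk {q}.

Definition qtop (V : Quantale) : V := qsup (fun _ => True).

Definition qmeet (V : Quantale) (x y : V) : V :=
  qsup (fun z => qle z x /\ qle z y).

Definition is_frame (V : Quantale) : Prop :=
  forall (x : V) (S : V -> Prop),
    qmeet x (qsup S) = qsup (fun z => exists s, S s /\ z = qmeet x s).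

Definition is_group (T : Type) (add : T -> T -> T) (zero : T) (opp : T -> T) : Prop :=
  (forall x y z, add x (add y z) = add (add x y) z) /\
  (forall x, add zero x = x) /\ (forall x, add x zero = x) /\
  (forall x, add (opp x) x = zero) /\ (forall x, add x (opp x) = zero).

Definition is_vcat (V : Quantale) (X : Type) (a : X -> X -> V) : Prop :=
  (forall x, qle qk (a x x)) /\
  (forall x x' x'', qle (qten (a x x') (a x' x'')) (a x x'')).

Definition is_vfunctor (V : Quantale) (X Y : Type) (a : X -> X -> V) (b : Y -> Y -> V)
  (f : X -> Y) : Prop :=
  forall x x', qle (a x x') (b (f x) (f x')).

Definition vtensor (V : Quantale) (X Y : Type) (a : X -> X -> V) (b : Y -> Y -> V)
  : X * Y -> X * Y -> V :=
  fun p q => qten (a (fst p) (fst q)) (b (snd p) (snd q)).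

Record RawVG (V : Quantale) := {
  r_car :> Type;
  r_add : r_car -> r_car -> r_car;
  r_zero : r_car;
  r_opp : r_car -> r_car;
  r_dist : r_car -> r_car -> V
}.

Arguments r_add {V r}.
Arguments r_zero {V}.
Arguments r_opp {V r}.
Arguments r_dist {V r}.

Definition is_vgroup (V : Quantale) (G : RawVG V) : Prop :=
  is_group (@r_add V G) (r_zero G) (@r_opp V G) /\
  is_vcat (@r_dist V G) /\
  (forall x1 x2 x1' x2' : G,
      qle (qten (r_dist x1 x2) (r_dist x1' x2')) (r_dist (r_add x1 x1') (r_add x2 x2'))).

Record VGroup (V : Quantale) := {
  vg_raw :> RawVG V;
  vg_ax : is_vgroup vg_raw
}.

Definition is_vhom (V : Quantale) (A B : RawVG V) (f : A -> B) : Prop :=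
  (forall x y : A, f (r_add x y) = r_add (f x) (f y)) /\
  is_vfunctor (@r_dist V A) (@r_dist V B) f.

(** [k : K -> A] is a kernel of [p : A -> B] in VGrp (a pointed category whose
    zero morphisms are the constant-zero maps). *)
Definition is_kernel_VGrp (V : Quantale) (K A B : RawVG V) (k : K -> A) (p : A -> B)
  : Prop :=
  is_vhom k /\ (forall x : K, p (k x) = r_zero B) /\
  forall (Z : VGroup V) (f : Z -> A),
    is_vhom (A := Z) f -> (forall z, p (f z) = r_zero B) ->
    exists g : Z -> K,
      is_vhom (A := Z) g /\ (forall z, k (g z) = f z) /\
      (forall g' : Z -> K, is_vhom (A := Z) g' -> (forall z, k (g' z) = f z) ->
         forall z, g' z = g z).

Definition is_bijective (X : Type) (f : X -> X) : Prop :=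
  exists g : X -> X, (forall x, g (f x) = x) /\ (forall x, f (g x) = x).

Definition is_group_action (V : Quantale) (X Y : VGroup V) (phi : Y -> X -> X) : Prop :=
  (forall (y : Y) (x x' : X), phi y (r_add x x') = r_add (phi y x) (phi y x')) /\
  (forall y : Y, is_bijective (phi y)) /\
  (forall x : X, phi (r_zero Y) x = x) /\
  (forall (y y' : Y) (x : X), phi (r_add y y') x = phi y (phi y' x)).

Definition sd_add (V : Quantale) (X Y : VGroup V) (phi : Y -> X -> X)
  (p q : X * Y) : X * Y :=
  (r_add (fst p) (phi (snd p) (fst q)), r_add (snd p) (snd q)).

Definition sd_opp (V : Quantale) (X Y : VGroup V) (phi : Y -> X -> X)
  (p : X * Y) : X * Y :=
  (phi (r_opp (snd p)) (r_opp (fst p)), r_opp (snd p)).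

Definition semidirect (V : Quantale) (X Y : VGroup V) (phi : Y -> X -> X) : RawVG V :=
  {| r_car := (X * Y)%type;
     r_add := sd_add phi;
     r_zero := (r_zero X, r_zero Y);
     r_opp := sd_opp phi;
     r_dist := vtensor (@r_dist V X) (@r_dist V Y) |}.

Definition incl1 (V : Quantale) (X Y : VGroup V) (x : X) : X * Y := (x, r_zero Y).
Definition incl2 (V : Quantale) (X Y : VGroup V) (y : Y) : X * Y := (r_zero X, y).
Definition proj2 (V : Quantale) (X Y : VGroup V) (p : X * Y) : (Y : Type) := snd p.

Definition split_extension_sd (V : Quantale) (X Y : VGroup V) (phi : Y -> X -> X)
  : Prop :=
  is_vgroup (semidirect phi) /\
  is_vhom (A := X) (B := semidirect phi) (@incl1 V X Y) /\
  is_vhom (A := semidirect phi) (B := Y) (@proj2 V X Y) /\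
  is_vhom (A := Y) (B := semidirect phi) (@incl2 V X Y) /\
  (forall y : Y, proj2 (incl2 X y) = y) /\
  is_kernel_VGrp (K := X) (A := semidirect phi) (B := Y) (@incl1 V X Y) (@proj2 V X Y).

Definition phibar (V : Quantale) (X Y : VGroup V) (phi : Y -> X -> X)
  (p : X * Y) : X * Y := (phi (snd p) (fst p), snd p).

(* Main.v *)
Require Import Defs.

Lemma qmono_r (V : Quantale) (z x y : V) : qle x y -> qle (qten z x) (qten z y).
Proof.
  intro H.
  assert (E : qsup (fun w => w = x \/ w = y) = y).
  { apply qle_antisym.
    - apply qsup_least. intros w [->| ->]; [exact H | apply qle_refl].
    - apply qsup_ub. right; reflexivity. }
  rewrite <- E. rewrite qten_supr. apply qsup_ub. exists x. split; [left; reflexivity | reflexivity].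
Qed.

Lemma qmono (V : Quantale) (x x' y y' : V) : qle x x' -> qle y y' -> qle (qten x y) (qten x' y').
Proof.
  intros H1 H2. apply qle_trans with (qten x y').
  - apply qmono_r; exact H2.
  - rewrite (qten_comm x), (qten_comm x'). apply qmono_r; exact H1.
Qed.

Lemma qunit_r (V : Quantale) (x : V) : qten x qk = x.
Proof. rewrite qten_comm; apply qten_unit. Qed.

Lemma qle_top (V : Quantale) (x : V) : qle x (qtop V).
Proof. unfold qtop. apply qsup_ub. exact I. Qed.

Lemma qten_le_l (V : Quantale) (Hk : qk = qtop V) (x y : V) : qle (qten x y) x.
Proof.
  apply qle_trans with (qten x qk); [apply qmono_r|rewrite qunit_r; apply qle_refl]. rewrite Hk. apply qle_top.
Qed.

Lemma qten_le_r (V : Quantale) (Hk : qk = qtop V) (x y : V) : qle (qten x y) y.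
Proof. rewrite qten_comm. apply qten_le_l; exact Hk. Qed.

Lemma qdiag (V : Quantale) (Hk : qk = qtop V) (X : VGroup V) (x : X) : r_dist x x = qk.
Proof.
  destruct (vg_ax X) as [_ [[Hr _] _]].
  apply qle_antisym; [rewrite Hk; apply qle_top | apply Hr].
Qed.

Lemma phi_zero (V : Quantale) (X Y : VGroup V) (phi : Y -> X -> X)
  (Hphi : is_group_action phi) (y : Y) : phi y (r_zero X) = r_zero X.
Proof.
  destruct Hphi as [Hadd _].
  destruct (vg_ax X) as [[XA [X0l [X0r [XNl XNr]]]] _].
  set (p := phi y (r_zero X)).
  assert (E : p = r_add p p).
  { unfold p. rewrite <- Hadd. rewrite X0l. reflexivity. }
  clearbody p. transitivity (r_add (r_add (r_opp p) p) p).
  - rewrite XNl, X0l; reflexivity.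
  - rewrite <- XA, <- E, XNl. reflexivity.
Qed.

Lemma qswap (V : Quantale) (a b c d : V) :
  qten (qten a b) (qten c d) = qten (qten a c) (qten b d).
Proof.
  rewrite <- !qten_assoc. f_equal. rewrite !qten_assoc. f_equal. apply qten_comm.
Qed.

Lemma q4 (V : Quantale) (a b c d : V) :
  qten (qten a b) (qten c d) = qten a (qten (qten c b) d).
Proof.
  rewrite (qten_comm c b). rewrite <- qten_assoc. rewrite <- !qten_assoc. reflexivity.
Qed.

Theorem theorem7p2 (V : Quantale) (Hframe : is_frame V) (Hk : qk = qtop V)
  (X Y : VGroup V) (phi : Y -> X -> X) (Hphi : is_group_action phi) :
  split_extension_sd phi <->
  is_vfunctor (vtensor (@r_dist V X) (@r_dist V Y)) (vtensor (@r_dist V X) (@r_dist V Y))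
    (phibar phi).
Proof.
  pose proof (phi_zero _ _ _ _ Hphi) as Hp0.
  destruct (vg_ax X) as [[XA [X0l [X0r [XNl XNr]]]] [[Xrefl Xtrans] Xadd]].
  destruct (vg_ax Y) as [[YA [Y0l [Y0r [YNl YNr]]]] [[Yrefl Ytrans] Yadd]].
  destruct Hphi as [Hpadd [Hbij [Hphi0 Hpcomp]]].
  split.
  - intros [[_ [_ Hsd]] _].
    intros [x y] [x' y'].
    specialize (Hsd (r_zero X, y) (r_zero X, y') (x, r_zero Y) (x', r_zero Y)).
    simpl in *; unfold vtensor, phibar, sd_add in *; simpl in *.
    rewrite X0l, X0l, Y0r, Y0r in Hsd.
    rewrite !qdiag in Hsd by exact Hk.
    rewrite qten_unit, qunit_r, qten_comm in Hsd. exact Hsd.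
  - intros Hf.
    assert (Hi1 : is_vhom (A := X) (B := semidirect phi) (@incl1 V X Y)).
    { split.
      - intros x x'. unfold incl1; simpl; unfold sd_add; simpl.
        rewrite Hphi0, Y0l. reflexivity.
      - intros x x'. unfold incl1; simpl; unfold vtensor; simpl.
        rewrite qdiag, qunit_r by exact Hk. apply qle_refl. }
    unfold split_extension_sd.
    split; [|split; [exact Hi1|split; [|split; [|split]]]].
    + split; [|split].
      * unfold is_group; simpl; unfold sd_add, sd_opp; simpl.
        split; [|split; [|split; [|split]]].
        -- intros [x1 y1] [x2 y2] [x3 y3]; simpl.
           rewrite Hpadd, Hpcomp, XA, YA. reflexivity.
        -- intros [x y]; simpl. rewrite Hphi0, X0l, Y0l. reflexivity.
        -- intros [x y]; simpl. rewrite Hp0, X0r, Y0r. reflexivity.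
        -- intros [x y]; simpl. rewrite <- Hpadd, XNl, Hp0, YNl. reflexivity.
        -- intros [x y]; simpl. rewrite <- Hpcomp, YNr, Hphi0, XNr. reflexivity.
      * split.
        -- intros [x y]; simpl; unfold vtensor; simpl.
           rewrite !qdiag, qunit_r by exact Hk. apply qle_refl.
        -- intros [x y] [x' y'] [x'' y'']; simpl; unfold vtensor; simpl.
           rewrite qswap. apply qmono; auto.
      * intros [x1 y1] [x2 y2] [x1' y1'] [x2' y2']; simpl; unfold vtensor, sd_add; simpl.
        specialize (Hf (x1', y1) (x2', y2)). unfold vtensor, phibar in Hf; simpl in Hf.
        rewrite q4. apply qle_trans with (qten (r_dist x1 x2)
           (qten (qten (r_dist (phi y1 x1') (phi y2 x2')) (r_dist y1 y2)) (r_dist y1' y2'))).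
        -- apply qmono_r. apply qmono; [exact Hf | apply qle_refl].
        -- rewrite <- q4. rewrite qswap. apply qmono; auto.
    + split.
      * intros p q. reflexivity.
      * intros [x y] [x' y']. unfold proj2; simpl; unfold vtensor; simpl.
        apply qten_le_r; exact Hk.
    + split.
      * intros y y'. unfold incl2; simpl; unfold sd_add; simpl.
        rewrite Hp0, X0l. reflexivity.
      * intros y y'. unfold incl2; simpl; unfold vtensor; simpl.
        rewrite qdiag, qten_unit by exact Hk. apply qle_refl.
    + intros y; reflexivity.
    + split; [exact Hi1 | split; [intros x; reflexivity|]].
      intros Z f [fh ff] fz.
      exists (fun z => fst (f z)). split; [split|split].
      * intros z z'. rewrite fh. simpl. unfold sd_add; simpl.
        pose proof (fz z) as E. unfold proj2 in E. rewrite E, Hphi0. reflexivity.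
      * intros z z'. apply qle_trans with (1 := ff z z'). simpl; unfold vtensor.
        apply qten_le_l; exact Hk.
      * intros z. pose proof (fz z) as E. unfold proj2 in E. unfold incl1.
        rewrite <- E. destruct (f z); reflexivity.
      * intros g' _ Hg' z. rewrite <- (Hg' z). reflexivity.
Qed.
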